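(* Let $(\mathbf W^B,\mathbf W^E)=(\{W^{B,n}\},\{W^{E,n}\})$ be a general sequence of wire-tap channels, $W^{B,n}$ from $\mathcal X^n$ to $\mathcal Y^n$ and $W^{E,n}$ from $\mathcal X^n$ to $\mathcal Z^n$. Then $$C_d(\mathbf W^B,\mathbf W^E)\le\sup_{\mathbf p,\mathbf Q}\big\{\underline I(1|\mathbf p,\mathbf W^B\mathbf Q)-\overline I(0|\mathbf p,\mathbf W^E\mathbf Q)\big\},$$ $$C_I(\mathbf W^B,\mathbf W^E)\le\sup_{\mathbf p,\mathbf Q}\big\{\underline I(1|\mathbf p,\mathbf W^B\mathbf Q)-\overline I(0|\mathbf p,\mathbf W^E\mathbf Q)\big\},$$ where the suprema range over all sequences of sets $\tilde{\mathcal X}^n$, all sequences $\mathbf Q=\{Q^n\}$ of channels from $\tilde{\mathcal X}^n$ to $\mathcal X^n$, and all sequences $\mathbf p=\{p^n\}$ of distributions on $\tilde{\mathcal X}^n$.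
   Context: Channels are maps $x\mapsto W_x$ into probability distributions on a finite or countable output set; $W_p(y)=\sum_xp(x)W_x(y)$. For $\mathbf W=\{W^n\}$ and $\mathbf Q=\{Q^n\}$, $\mathbf W\mathbf Q=\{W^nQ^n\}$ with $(W^nQ^n)_{\tilde x}(y):=\sum_{x\in\mathcal X^n}W^n_x(y)Q^n_{\tilde x}(x)$. A wire-tap code $\Phi=(M,\{Q_i\},\{\mathcal D_i\})$ for $(W^B,W^E)$: input distributions $Q_1,\dots,Q_M$, pairwise disjoint decoding sets $\mathcal D_i$ for the main receiver; $|\Phi|=M$, $\epsilon_B(\Phi)=\frac1M\sum_iW^B_{Q_i}(\mathcal D_i^c)$, $I_E(\Phi)=\sum_i\frac1MD(W^E_{Q_i}\|W^E_\Phi)$ with $W^E_\Phi=\frac1M\sum_iW^E_{Q_i}$, $d_E(\Phi)=\frac1{M(M-1)}\sum_{i\ne j}\sum_z|W^E_{Q_i}(z)-W^E_{Q_j}(z)|$. $C_d(\mathbf W^B,\mathbf W^E):=\sup\{\liminf_n\frac1n\log|\Phi_n|\}$ over sequences of wire-tap codes with $\epsilon_B(\Phi_n)\to0$, $d_E(\Phi_n)\to0$; $C_I$ the same with $I_E(\Phi_n)/n\to0$ instead of $d_E(\Phi_n)\to0$. $\overline I(\epsilon|\mathbf p,\mathbf W):=\inf\{a:\limsup_n\mathrm{E}_{p^n}W^n_x\{y:\frac1n\log\frac{W^n_x(y)}{W^n_{p^n}(y)}>a\}\le\epsilon\}$, $\underline I(\epsilon|\mathbf p,\mathbf W):=\inf\{a:\liminf_n\mathrm{E}_{p^n}W^n_x\{y:\frac1n\log\frac{W^n_x(y)}{W^n_{p^n}(y)}>a\}\le\epsilon\}$,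 with ''$\le\epsilon$'' replaced by ''$<1$'' when $\epsilon=1$. *)

(* Defs.v *)
From HB Require Import structures.
From mathcomp Require Import all_boot all_order all_algebra.
From mathcomp Require Import all_classical all_reals all_analysis.
Set Implicit Arguments. Unset Strict Implicit. Unset Printing Implicit Defensive.
Import Order.TTheory GRing.Theory Num.Theory numFieldNormedType.Exports.
Local Open Scope classical_set_scope.
Local Open Scope ring_scope.

Section Defs.
Variable R : realType.

Definition is_dist (T : countType) (p : T -> R) : Prop :=
  (forall x, 0 <= p x) /\ (\esum_(x in [set: T]) (p x)%:E = 1)%E.

Definition is_channel (X Y : countType) (W : X -> Y -> R) : Prop :=
  forall x, is_dist (W x).

Definition out_dist (X Y : countType) (W : X -> Y -> R) (p : X -> R) (y : Y) : R :=
  fine (\esum_(x in [set: X]) (p x * W x y)%:E)%E.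

Definition chcomp (Xt X Y : countType) (W : X -> Y -> R) (Q : Xt -> X -> R)
  : Xt -> Y -> R :=
  fun xt y => fine (\esum_(x in [set: X]) (W x y * Q xt x)%:E)%E.

Definition divergence (Z : countType) (P Q : Z -> R) : \bar R :=
  if `[< exists z, 0 < P z /\ Q z = 0 >] then +oo%E else
  (\esum_(z in [set: Z]) (Num.max (P z * ln (P z / Q z)) 0)%:E
   - \esum_(z in [set: Z]) (Num.max (- (P z * ln (P z / Q z))) 0)%:E)%E.

Record wtcode (X Y : countType) := WTCode {
  wt_M : nat;
  wt_M_gt0 : (0 < wt_M)%N;
  wt_Q : 'I_wt_M -> X -> R;
  wt_Q_dist : forall i, is_dist (wt_Q i);
  wt_D : 'I_wt_M -> set Y;
  wt_D_disj : forall i j, i != j -> wt_D i `&` wt_D j = set0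
}.
Arguments wt_M {X Y} w : rename.
Arguments wt_Q {X Y} w _ : rename.
Arguments wt_D {X Y} w _ : rename.

Variables (X Y Z : countType).

Definition eps_B (WB : X -> Y -> R) (c : wtcode X Y) : R :=
  (wt_M c)%:R^-1 * \sum_(i < wt_M c)
     fine (\esum_(y in ~` (wt_D c i)) (out_dist WB (wt_Q c i) y)%:E)%E.

Definition code_out (WE : X -> Z -> R) (c : wtcode X Y) (z : Z) : R :=
  (wt_M c)%:R^-1 * \sum_(i < wt_M c) out_dist WE (wt_Q c i) z.

Definition I_E (WE : X -> Z -> R) (c : wtcode X Y) : \bar R :=
  (\sum_(i < wt_M c) ((wt_M c)%:R^-1)%:E *
     divergence (out_dist WE (wt_Q c i)) (code_out WE c))%E.

Definition d_E (WE : X -> Z -> R) (c : wtcode X Y) : R :=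
  ((wt_M c * (wt_M c).-1)%:R)^-1 *
  \sum_(i < wt_M c) \sum_(j < wt_M c | i != j)
     fine (\esum_(z in [set: Z])
        (`|out_dist WE (wt_Q c i) z - out_dist WE (wt_Q c j) z|)%:E)%E.

End Defs.

Section Cap.
Variable R : realType.
Variables (X Y Z : nat -> countType).

Definition code_rate (c : forall n, wtcode R (X n) (Y n)) : \bar R :=
  limn_einf (fun n => ((n%:R)^-1 * ln ((wt_M (c n))%:R) : R)%:E).

Definition C_d (WB : forall n, X n -> Y n -> R) (WE : forall n, X n -> Z n -> R)
  : \bar R :=
  ereal_sup [set l | exists c : forall n, wtcode R (X n) (Y n),
     (fun n => eps_B (WB n) (c n)) @ \oo --> (0:R) /\
     (fun n => d_E (WE n) (c n)) @ \oo --> (0:R) /\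
     l = code_rate c].

Definition C_I (WB : forall n, X n -> Y n -> R) (WE : forall n, X n -> Z n -> R)
  : \bar R :=
  ereal_sup [set l | exists c : forall n, wtcode R (X n) (Y n),
     (fun n => eps_B (WB n) (c n)) @ \oo --> (0:R) /\
     (fun n => (I_E (WE n) (c n) * ((n%:R)^-1)%:E)%E) @ \oo --> 0%E /\
     l = code_rate c].
End Cap.

Section Spectrum.
Variable R : realType.
Variables (X Y : nat -> countType).

Definition spec_prob (p : forall n, X n -> R) (W : forall n, X n -> Y n -> R)
  (a : R) (n : nat) : \bar R :=
  (\esum_(x in [set: X n]) (p n x)%:E *
     \esum_(y in [set: Y n])
       (if a < (n%:R)^-1 * ln (W n x y / out_dist (W n) (p n) y)
        then W n x y else 0)%:E)%E.

Definition I_over (eps : R) (p : forall n, X n -> R) (W : forall n, X n -> Y n -> R)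
  : \bar R :=
  ereal_inf [set a%:E | a in [set a : R |
     if eps == 1 then (limn_esup (spec_prob p W a) < 1%:E)%E
     else (limn_esup (spec_prob p W a) <= eps%:E)%E]].

Definition I_under (eps : R) (p : forall n, X n -> R) (W : forall n, X n -> Y n -> R)
  : \bar R :=
  ereal_inf [set a%:E | a in [set a : R |
     if eps == 1 then (limn_einf (spec_prob p W a) < 1%:E)%E
     else (limn_einf (spec_prob p W a) <= eps%:E)%E]].
End Spectrum.

Definition secrecy_bound (R : realType) (X Y Z : nat -> countType)
  (WB : forall n, X n -> Y n -> R) (WE : forall n, X n -> Z n -> R) : \bar R :=
  ereal_sup [set v | exists (Xt : nat -> countType)
      (Q : forall n, Xt n -> X n -> R) (p : forall n, Xt n -> R),
      (forall n, is_channel (Q n)) /\ (forall n, is_dist (p n)) /\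
      v = (I_under 1 p (fun n => chcomp (WB n) (Q n))
           - I_over 0 p (fun n => chcomp (WE n) (Q n)))%E].

(* Main.v *)
Require Import Defs.
From HB Require Import structures.
From mathcomp Require Import all_boot all_order all_algebra.
From mathcomp Require Import all_classical all_reals all_analysis.
From mathcomp Require Import ring lra zify.
Set Implicit Arguments. Unset Strict Implicit. Unset Printing Implicit Defensive.
Import Order.TTheory GRing.Theory Num.Theory numFieldNormedType.Exports.
Local Open Scope classical_set_scope.
Local Open Scope ring_scope.

Section Esum.
Variable R : realType.
Local Open Scope ereal_scope.

Lemma esumZ (T : choiceType) (S : set T) (r : R) (a : T -> \bar R) :
  (0 <= r)%R -> (forall x, 0 <= a x) ->
  \esum_(i in S) (r%:E * a i) = r%:E * \esum_(i in S) a i.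
Proof.
move=> r0 a0; rewrite /esum -ereal_supZl//; last first.
  apply/set0P; exists 0; exists set0; first exact: fsets_set0.
  by rewrite fsbig_set0.
congr ereal_sup; apply/seteqP; split=> x.
- move=> [A fA <-]; exists (\sum_(i \in A) a i); first by exists A.
  by rewrite ge0_mule_fsumr.
- move=> [_ [A fA <-] <-]; exists A => //. by rewrite ge0_mule_fsumr.
Qed.

Lemma esum_swap (T1 T2 : choiceType) (a : T1 -> T2 -> \bar R) :
  (forall i j, 0 <= a i j) ->
  \esum_(i in [set: T1]) \esum_(j in [set: T2]) a i j =
  \esum_(j in [set: T2]) \esum_(i in [set: T1]) a i j.
Proof.
move=> a0; rewrite (@esum_esum _ _ _ _ (fun=> setT))//.
rewrite (@esum_esum _ _ _ _ (fun=> setT))//.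
rewrite (reindex_esum ([set: T2] `*`` (fun=> [set: T1])) _ (fun x => (x.2, x.1)))//.
split=> //=.
- by move=> [i1 i2] [j1 j2] /= _ _ [] -> ->.
- by move=> [i1 i2] _ /=; exists (i2, i1).
Qed.

Section Basic.
Variables (X Y : countType).

Lemma dist_ge0 (T : countType) (q : T -> R) : is_dist q -> forall x, (0 <= q x)%R.
Proof. by case. Qed.

Lemma dist_le1 (T : countType) (q : T -> R) : is_dist q -> forall x, (q x <= 1)%R.
Proof.
move=> [q0 q1] x; rewrite -lee_fin -q1; apply: esum_ge.
exists [set x]; last by rewrite fsbig_set1.
by split => //; exact: finite_set1.
Qed.

Lemma out_dist_fin (W : X -> Y -> R) (q : X -> R) y :
  is_channel W -> is_dist q ->
  (out_dist W q y)%:E = \esum_(x in [set: X]) (q x * W x y)%:E /\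
  (0 <= out_dist W q y <= 1)%R.
Proof.
move=> hW hq.
have e0 : 0 <= \esum_(x in [set: X]) (q x * W x y)%:E.
  by apply: esum_ge0 => x _; rewrite lee_fin; apply: mulr_ge0; [exact: (dist_ge0 hq x)|exact: (dist_ge0 (hW x) y)].
have e1 : \esum_(x in [set: X]) (q x * W x y)%:E <= 1.
  case: hq => hq0 <-; apply: le_esum => x _; rewrite lee_fin ler_piMr //.
  exact: dist_le1 (hW x) y.
have ef : \esum_(x in [set: X]) (q x * W x y)%:E \is a fin_num.
  by rewrite ge0_fin_numE // (le_lt_trans e1) // ltry.
have E : (out_dist W q y)%:E = \esum_(x in [set: X]) (q x * W x y)%:E by rewrite /out_dist fineK.
by split => //; rewrite -!lee_fin E e0 e1.
Qed.

Lemma out_dist_sum (W : X -> Y -> R) (q : X -> R) :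
  is_channel W -> is_dist q ->
  \esum_(y in [set: Y]) (out_dist W q y)%:E = 1.
Proof.
move=> hW hq.
rewrite (eq_esum (fun y _ => (out_dist_fin y hW hq).1)) -esum_swap; last first.
  by move=> x y; rewrite lee_fin; apply: mulr_ge0; [exact: (dist_ge0 hq x)|exact: (dist_ge0 (hW x) y)].
case: hq => hq0 hq1; rewrite -hq1; apply: eq_esum => x _.
under eq_esum do rewrite EFinM.
rewrite esumZ //; last by move=> y; rewrite lee_fin; apply: dist_ge0 (hW x) y.
by case: (hW x) => _ ->; rewrite mule1.
Qed.
End Basic.
End Esum.

Section More.
Variable R : realType.
Local Open Scope ereal_scope.

Lemma esum_ge_term (T : choiceType) (f : T -> \bar R) x :
  (forall y, 0 <= f y) -> f x <= \esum_(y in [set: T]) f y.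
Proof.
move=> f0; apply: esum_ge; exists [set x]; last by rewrite fsbig_set1.
by split => //; exact: finite_set1.
Qed.

Lemma esum_le_setT (T : choiceType) (S : set T) (f : T -> \bar R) :
  (forall y, 0 <= f y) -> \esum_(y in S) f y <= \esum_(y in [set: T]) f y.
Proof.
move=> f0; rewrite esum_mkcond; apply: le_esum => y _; case: ifP => //.
Qed.

Lemma esum_bounded (T : choiceType) (S : set T) (f g : T -> R) :
  (forall y, 0 <= f y <= g y)%R -> \esum_(y in [set: T]) (g y)%:E = 1 ->
  \esum_(y in S) (f y)%:E = (fine (\esum_(y in S) (f y)%:E))%:E /\
  (0 <= fine (\esum_(y in S) (f y)%:E) <= 1)%R.
Proof.
move=> fg g1.
have e0 : 0 <= \esum_(y in S) (f y)%:E.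
  by apply: esum_ge0 => y _; rewrite lee_fin; case/andP: (fg y).
have e1 : \esum_(y in S) (f y)%:E <= 1.
  rewrite -g1; apply: le_trans (esum_le_setT _ _) _.
    by move=> y; rewrite lee_fin; case/andP: (fg y).
  by apply: le_esum => y _; rewrite lee_fin; case/andP: (fg y).
have ef : \esum_(y in S) (f y)%:E \is a fin_num.
  by rewrite ge0_fin_numE // (le_lt_trans e1) // ltry.
have E := fineK ef.
by split => //; rewrite -!lee_fin E e0 e1.
Qed.

Lemma esum_boundedC (T : choiceType) (S : set T) (f g : T -> R) (C : R) :
  (forall y, 0 <= f y <= g y)%R -> \esum_(y in [set: T]) (g y)%:E = C%:E ->
  \esum_(y in S) (f y)%:E = (fine (\esum_(y in S) (f y)%:E))%:E /\
  (0 <= fine (\esum_(y in S) (f y)%:E) <= C)%R.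
Proof.
move=> fg g1.
have e0 : 0 <= \esum_(y in S) (f y)%:E.
  by apply: esum_ge0 => y _; rewrite lee_fin; case/andP: (fg y).
have e1 : \esum_(y in S) (f y)%:E <= C%:E.
  rewrite -g1; apply: le_trans (esum_le_setT _ _) _.
    by move=> y; rewrite lee_fin; case/andP: (fg y).
  by apply: le_esum => y _; rewrite lee_fin; case/andP: (fg y).
have ef : \esum_(y in S) (f y)%:E \is a fin_num.
  by rewrite ge0_fin_numE // (le_lt_trans e1) // ltry.
have E := fineK ef.
by split => //; rewrite -!lee_fin E e0 e1.
Qed.
End More.

Lemma esum_finT (R : realType) (T : finType) (F : T -> \bar R) :
  (forall i, 0 <= F i)%E -> (\esum_(i in [set: T]) F i = \sum_(i : T) F i)%E.
Proof.
move=> F0; rewrite esum_fset //; last first.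
  exact: finite_finset.
rewrite -big_enum /= [RHS]fsbig_seq ?enum_uniq //; apply: eq_fsbigl.
by apply/seteqP; split => x //= _; rewrite mem_enum.
Qed.

Section Code.
Variable R : realType.
Variables (X Y : countType) (WB : X -> Y -> R) (hWB : is_channel WB).
Variable c : wtcode R X Y.

Definition pu : 'I_(wt_M c) -> R := fun _ => ((wt_M c)%:R)^-1.
Definition Wc := chcomp WB (wt_Q (w:=c)).

Lemma M_gt0 : (0 < (wt_M c)%:R :> R)%R.
Proof. by rewrite ltr0n; exact: wt_M_gt0. Qed.


Lemma pu_dist : is_dist pu.
Proof.
split => [m|]; first by rewrite /pu invr_ge0 ler0n.
rewrite esum_finT; last by move=> m; rewrite lee_fin /pu invr_ge0 ler0n.
rewrite sumEFin sumr_const card_ord /pu -(mulr_natr ((wt_M c)%:R^-1)) mulVf //; last by have := M_gt0; rewrite lt0r => /andP[].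
Qed.

Lemma Wc_eq m y : Wc m y = out_dist WB (wt_Q (w:=c) m) y.
Proof. by rewrite /Wc /chcomp /out_dist; congr fine; apply: eq_esum => x _; rewrite mulrC. Qed.

Lemma Wc_chan : is_channel Wc.
Proof.
move=> m; split => [y|].
  by rewrite Wc_eq; case/andP: (out_dist_fin y hWB (@wt_Q_dist _ _ _ c m)).2.
by under eq_esum do rewrite Wc_eq; apply: out_dist_sum hWB (@wt_Q_dist _ _ _ c m).
Qed.

Definition Wp y := out_dist Wc pu y.

Lemma Wp_ge m y : (pu m * Wc m y <= Wp y)%R.
Proof.
rewrite -lee_fin /Wp (out_dist_fin y Wc_chan pu_dist).1.
apply: (@esum_ge_term R _ (fun m => (pu m * Wc m y)%:E) m) => k.
by rewrite lee_fin; apply: mulr_ge0; [exact: (dist_ge0 pu_dist k)|exact: (dist_ge0 (Wc_chan k) y)].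
Qed.

Lemma Wp_01 y : (0 <= Wp y <= 1)%R.
Proof. exact: (out_dist_fin y Wc_chan pu_dist).2. Qed.

Lemma Wp_sum : (\esum_(y in [set: Y]) (Wp y)%:E = 1)%E.
Proof. exact: out_dist_sum Wc_chan pu_dist. Qed.

Lemma disj_sum y :
  (\sum_(m < wt_M c) (if y \in wt_D (w:=c) m then Wp y else 0) <= Wp y)%R.
Proof.
have [[m0 ym0]|N] := pselect (exists m, y \in wt_D (w:=c) m).
  rewrite (bigD1 m0) //= ym0 big1 ?addr0 // => m ne.
  case: ifP => // ym; exfalso.
  have := @wt_D_disj _ _ _ c _ _ ne; rewrite -[_ `&` _]/(wt_D (w:=c) m `&` wt_D (w:=c) m0) => /seteqP[+ _].
  by move=> /(_ y); apply; split; rewrite -inE.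
rewrite big1; first by case/andP: (Wp_01 y).
by move=> m _; case: ifP => // ym; exfalso; apply: N; exists m.
Qed.


Lemma WpE y : Wp y = (((wt_M c)%:R)^-1 * \sum_(m < wt_M c) Wc m y)%R.
Proof.
rewrite /Wp /out_dist esum_finT; last first.
  by move=> m; rewrite lee_fin; apply: mulr_ge0; [exact: (dist_ge0 pu_dist m)|exact: (dist_ge0 (Wc_chan m) y)].
by rewrite sumEFin /= mulr_sumr.
Qed.

Lemma code_outE z : code_out WB c z = Wp z.
Proof. by rewrite WpE /code_out; congr (_ * _)%R; apply: eq_bigr => m _; rewrite Wc_eq. Qed.

Definition Dd (m j : 'I_(wt_M c)) := fine (\esum_(y in [set: Y])
   (`|out_dist WB (wt_Q (w:=c) m) y - out_dist WB (wt_Q (w:=c) j) y|)%:E)%E.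

Lemma DdE m j : (\esum_(y in [set: Y])
   (`|out_dist WB (wt_Q (w:=c) m) y - out_dist WB (wt_Q (w:=c) j) y|)%:E)%E = (Dd m j)%:E
  /\ (0 <= Dd m j)%R.
Proof.
have hp : forall y, (0 <= `|out_dist WB (wt_Q (w:=c) m) y - out_dist WB (wt_Q (w:=c) j) y|
   <= out_dist WB (wt_Q (w:=c) m) y + out_dist WB (wt_Q (w:=c) j) y)%R.
  move=> y; rewrite normr_ge0 /=.
  case/andP: (out_dist_fin y hWB (@wt_Q_dist _ _ _ c m)).2 => h1 _.
  case/andP: (out_dist_fin y hWB (@wt_Q_dist _ _ _ c j)).2 => h2 _.
  by rewrite (le_trans (ler_normB _ _)) // !ger0_norm.
have hs : (\esum_(y in [set: Y]) (out_dist WB (wt_Q (w:=c) m) y + out_dist WB (wt_Q (w:=c) j) y)%:E = 2%:E)%E.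
  under eq_esum do rewrite EFinD.
  rewrite esumD; last 2 first.
  + by move=> y _; rewrite lee_fin; case/andP: (out_dist_fin y hWB (@wt_Q_dist _ _ _ c m)).2.
  + by move=> y _; rewrite lee_fin; case/andP: (out_dist_fin y hWB (@wt_Q_dist _ _ _ c j)).2.
  by rewrite (out_dist_sum hWB (@wt_Q_dist _ _ _ c m)) (out_dist_sum hWB (@wt_Q_dist _ _ _ c j)).
have [h1 /andP[h2 _]] := esum_boundedC setT hp hs.
by split.
Qed.

Lemma bad_bound m y (a s : R) : (0 < s)%R ->
  ~~ (a < s * ln (Wc m y / Wp y))%R -> (Wc m y <= expR (a / s) * Wp y)%R.
Proof.
move=> s0 nc.
have W0 : (0 <= Wc m y)%R by exact: (dist_ge0 (Wc_chan m) y).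
have [->|Wpos] := eqVneq (Wc m y) 0%R.
  by apply: mulr_ge0; [exact: expR_ge0|case/andP: (Wp_01 y)].
have Wgt : (0 < Wc m y)%R by rewrite lt0r Wpos.
have pu0 : (0 < pu m)%R by rewrite /pu invr_gt0 M_gt0.
have Wpg : (0 < Wp y)%R by apply: lt_le_trans (Wp_ge m y); rewrite mulr_gt0.
have rg : (0 < Wc m y / Wp y)%R by rewrite divr_gt0.
rewrite -ler_pdivrMr //.
rewrite -(lnK rg) ler_expR.
rewrite ler_pdivlMr // mulrC; by rewrite leNgt.
Qed.

Section VH.
Variables (a s : R) (hs : (0 < s)%R).
Let K := expR (a / s).
Let Gr m y := if (a < s * ln (Wc m y / out_dist Wc pu y))%R then Wc m y else 0%R.
Let Fr m y := if y \in wt_D (w:=c) m then Wp y else 0%R.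
Let g m := fine (\esum_(y in [set: Y]) (Gr m y)%:E)%E.
Let e m := fine (\esum_(y in ~` wt_D (w:=c) m) (out_dist WB (wt_Q (w:=c) m) y)%:E)%E.
Let f m := fine (\esum_(y in [set: Y]) (Fr m y)%:E)%E.

Let gE m : (\esum_(y in [set: Y]) (Gr m y)%:E)%E = (g m)%:E.
Proof.
rewrite /g; apply: (proj1 (@esum_bounded R Y setT (Gr m) (Wc m) _ _)); last exact: (Wc_chan m).2.
move=> y; rewrite /Gr; case: ifP => _; rewrite ?lexx ?andbT; last exact: (dist_ge0 (Wc_chan m) y).
by rewrite (dist_ge0 (Wc_chan m) y).
Qed.

Let eE m : (\esum_(y in ~` wt_D (w:=c) m) (out_dist WB (wt_Q (w:=c) m) y)%:E)%E = (e m)%:E.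
Proof.
rewrite /e; apply: (proj1 (@esum_bounded R Y _ _ (out_dist WB (wt_Q (w:=c) m)) _ _)); last first.
  exact: out_dist_sum hWB (@wt_Q_dist _ _ _ c m).
by move=> y; rewrite lexx andbT; case/andP: (out_dist_fin y hWB (@wt_Q_dist _ _ _ c m)).2.
Qed.

Let fE m : (\esum_(y in [set: Y]) (Fr m y)%:E)%E = (f m)%:E.
Proof.
rewrite /f; apply: (proj1 (@esum_bounded R Y setT (Fr m) Wp _ _)); last exact: Wp_sum.
move=> y; rewrite /Fr; case: ifP => _; rewrite ?lexx ?andbT; last by case/andP: (Wp_01 y).
by case/andP: (Wp_01 y).
Qed.

Let key m : (1 <= g m + e m + K * f m)%R.
Proof.
have H : (\esum_(y in [set: Y]) (Wc m y)%:E <= \esum_(y in [set: Y])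
   ((Gr m y)%:E + ((if y \in ~` wt_D (w:=c) m then (out_dist WB (wt_Q (w:=c) m) y)%:E else 0) + K%:E * (Fr m y)%:E)))%E.
  apply: le_esum => y _; rewrite -Wc_eq /Gr /Fr in_setC.
  have W0 : (0 <= Wc m y)%R by exact: (dist_ge0 (Wc_chan m) y).
  have K0 : (0 <= K)%R by exact: expR_ge0.
  have Wp0 : (0 <= Wp y)%R by case/andP: (Wp_01 y).
  case: ifPn => cond; case: (boolP (y \in wt_D (w:=c) m)) => yD; rewrite /= -?EFinM -?EFinD lee_fin.
  - by rewrite add0r lerDl mulr_ge0.
  - by rewrite mulr0 addr0 lerDl.
  - by rewrite !add0r; exact: bad_bound.
  - by rewrite mulr0 !add0r addr0.
rewrite (Wc_chan m).2 esumD in H; last 2 first.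
- by move=> y _; rewrite /Gr; case: ifP => _; rewrite lee_fin ?lexx //; exact: (dist_ge0 (Wc_chan m) y).
- move=> y _; apply: adde_ge0; first by case: ifP => _ //; rewrite lee_fin; case/andP: (out_dist_fin y hWB (@wt_Q_dist _ _ _ c m)).2.
  rewrite /Fr; case: ifP => _; rewrite -EFinM lee_fin ?mulr0 //.
  by apply: mulr_ge0; [exact: expR_ge0|case/andP: (Wp_01 y)].
rewrite esumD in H; last 2 first.
- by move=> y _; case: ifP => _ //; rewrite lee_fin; case/andP: (out_dist_fin y hWB (@wt_Q_dist _ _ _ c m)).2.
- move=> y _; rewrite /Fr; case: ifP => _; rewrite -EFinM lee_fin ?mulr0 //.
  by apply: mulr_ge0; [exact: expR_ge0|case/andP: (Wp_01 y)].
rewrite esumZ in H; last 2 first.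
- exact: expR_ge0.
- by move=> y; rewrite /Fr; case: ifP => _; rewrite lee_fin //; case/andP: (Wp_01 y).
rewrite -esum_mkcond gE eE fE -EFinM -!EFinD lee_fin in H.
by rewrite -addrA.
Qed.

Lemma sumf_le1 : (\sum_(m < wt_M c) f m <= 1)%R.
Proof.
rewrite -lee_fin -sumEFin.
under eq_bigr do rewrite -fE.
rewrite -esum_sum; last by move=> y m _ _; rewrite /Fr; case: ifP => _; rewrite lee_fin //; case/andP: (Wp_01 y).
rewrite -Wp_sum; apply: le_esum => y _; rewrite sumEFin lee_fin; exact: disj_sum.
Qed.

Lemma VH : ((1 - eps_B WB c - expR (a / s) / (wt_M c)%:R)%:E <=
  \esum_(m in [set: 'I_(wt_M c)]) (pu m)%:E * \esum_(y in [set: Y])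
    (if (a < s * ln (Wc m y / out_dist Wc pu y))%R then Wc m y else 0%R)%:E)%E.
Proof.
rewrite (eq_esum (fun m _ => congr1 (fun t => (pu m)%:E * t)%E (gE m))).
rewrite esum_finT; last first.
  by move=> m; rewrite -EFinM lee_fin; apply: mulr_ge0; [rewrite /pu invr_ge0 ler0n|rewrite /g; apply: fine_ge0; apply: esum_ge0 => y _; rewrite /Gr; case: ifP => _; rewrite lee_fin ?lexx //; exact: (dist_ge0 (Wc_chan m) y)].
under eq_bigr do rewrite -EFinM.
rewrite sumEFin lee_fin /eps_B -/e -mulr_sumr -/K.
have hsum : ((wt_M c)%:R <= \sum_(m < wt_M c) g m + \sum_(m < wt_M c) e m + K * \sum_(m < wt_M c) f m)%R.
  have : (\sum_(m < wt_M c) 1 <= \sum_(m < wt_M c) (g m + e m + K * f m))%R.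
    by apply: ler_sum => m _; exact: key.
  by rewrite sumr_const card_ord big_split big_split /= -mulr_sumr.
set G := \sum_(m < wt_M c) g m; set E := \sum_(m < wt_M c) e m; set F := \sum_(m < wt_M c) f m.
have F1 : (F <= 1)%R by exact: sumf_le1.
have K0 : (0 <= K)%R by exact: expR_ge0.
rewrite /pu; set u := ((wt_M c)%:R^-1)%R.
have u0 : (0 < u)%R by rewrite invr_gt0 M_gt0.
have uM : (u * (wt_M c)%:R = 1)%R by rewrite mulVf //; have := M_gt0; rewrite lt0r => /andP[].
have h1 : (u * (wt_M c)%:R <= u * (G + E + K * F))%R by rewrite ler_pM2l.
have h2 : (u * (K * F) <= u * K)%R by rewrite ler_pM2l // ler_piMr.
rewrite !mulrDr in h1; rewrite [K / _]mulrC -/u; nra.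
Qed.

Let g01 m : (0 <= g m <= 1)%R.
Proof.
apply: (proj2 (@esum_bounded R Y setT (Gr m) (Wc m) _ _)); last exact: (Wc_chan m).2.
move=> y; rewrite /Gr; case: ifP => _; rewrite ?lexx ?andbT; last exact: (dist_ge0 (Wc_chan m) y).
by rewrite (dist_ge0 (Wc_chan m) y).
Qed.

Let spec_eq : (\esum_(m in [set: 'I_(wt_M c)]) (pu m)%:E * \esum_(y in [set: Y])
    (if (a < s * ln (Wc m y / out_dist Wc pu y))%R then Wc m y else 0%R)%:E)%E =
  (((wt_M c)%:R)^-1 * \sum_(m < wt_M c) g m)%:E.
Proof.
rewrite (eq_esum (fun m _ => congr1 (fun t => (pu m)%:E * t)%E (gE m))).
rewrite esum_finT; last first.
  by move=> m; rewrite -EFinM lee_fin; apply: mulr_ge0; [rewrite /pu invr_ge0 ler0n|case/andP: (g01 m)].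
under eq_bigr do rewrite -EFinM.
by rewrite sumEFin -mulr_sumr.
Qed.

Let cond_big m y : (a < s * ln (Wc m y / Wp y))%R -> (0 < a)%R ->
  (0 < Wp y)%R /\ (a / s < ln (Wc m y / Wp y))%R /\ (0 < Wc m y)%R.
Proof.
move=> cnd a0.
have Wp0 : (0 <= Wp y)%R by case/andP: (Wp_01 y).
have W0 : (0 <= Wc m y)%R by exact: (dist_ge0 (Wc_chan m) y).
have r0 : (0 < Wc m y / Wp y)%R.
  rewrite lt_neqAle divr_ge0 // andbT; apply/negP => /eqP r0.
  by move: cnd; rewrite -r0 ln0 // mulr0 ltNge (ltW a0).
have lr : (a / s < ln (Wc m y / Wp y))%R by rewrite ltr_pdivrMr // mulrC.
split; last split => //.
  rewrite lt_neqAle Wp0 andbT; apply/negP => /eqP E.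
  by move: r0; rewrite -E invr0 mulr0 ltxx.
rewrite lt_neqAle W0 andbT; apply/negP => /eqP E.
by move: r0; rewrite -E mul0r ltxx.
Qed.

Lemma spec_dE : (2 <= K)%R -> (((wt_M c)%:R)^-1 * \sum_(m < wt_M c) g m <= 2 * d_E WB c)%R.
Proof.
move=> K2.
have as0 : (0 < a / s)%R.
  rewrite ltNge; apply/negP => h; move: K2; rewrite /K.
  have : (expR (a / s) <= 1)%R by rewrite expR_le1.
  move=> h1 h2; have h3 := le_trans h2 h1; lra.
have a0 : (0 < a)%R by move: as0; rewrite pmulr_lgt0 // invr_gt0.
set u := (((wt_M c)%:R)^-1)%R.
have u0 : (0 < u)%R by rewrite invr_gt0 M_gt0.
have uM : (u * (wt_M c)%:R = 1)%R by rewrite mulVf //; have := M_gt0; rewrite lt0r => /andP[].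
have gb m : (g m <= 2 * (u * \sum_(j < wt_M c) Dd m j))%R.
  rewrite -lee_fin -gE.
  apply: (@le_trans _ _ (\esum_(y in [set: Y]) ((2 * u)%:E * \sum_(j < wt_M c)
     (`|out_dist WB (wt_Q (w:=c) m) y - out_dist WB (wt_Q (w:=c) j) y|)%:E))%E).
    apply: le_esum => y _; rewrite /Gr sumEFin -EFinM lee_fin.
    case: ifPn => cnd; last by apply: mulr_ge0; [rewrite mulr_ge0 // ltW|apply: sumr_ge0 => j _].
    have [Wp0 [lr W0]] := cond_big cnd a0.
    have r2 : (2 < Wc m y / Wp y)%R.
      by apply: le_lt_trans K2 _; rewrite /K -(lnK (x := Wc m y / Wp y)) ?ltr_expR // posrE divr_gt0.
    have h2 : (2 * Wp y < Wc m y)%R by rewrite -ltr_pdivlMr.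
    have hd : (Wc m y - Wp y = u * \sum_(j < wt_M c) (Wc m y - Wc j y))%R.
      rewrite WpE -/u sumrB sumr_const card_ord mulrBr -mulr_natr mulrA.
      by rewrite mulrAC uM mul1r.
    have hl : (u * \sum_(j < wt_M c) (Wc m y - Wc j y) <=
               u * \sum_(j < wt_M c) `|out_dist WB (wt_Q (w:=c) m) y - out_dist WB (wt_Q (w:=c) j) y|)%R.
      rewrite ler_pM2l //; apply: ler_sum => j _; rewrite !Wc_eq; exact: ler_norm.
    rewrite -hd in hl; rewrite -mulrA; move: hl.
    set S := (u * _)%R; lra.
  rewrite esumZ; last 2 first.
  - by rewrite mulr_ge0 // ltW.
  - by move=> y; apply: sume_ge0 => j _; rewrite lee_fin.
  rewrite esum_sum; last by move=> y j _ _; rewrite lee_fin.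
  under eq_bigr do rewrite (DdE m _).1.
  by rewrite sumEFin -EFinM mulrA.
have dEq : d_E WB c = ((((wt_M c) * (wt_M c).-1)%:R)^-1 *
   \sum_(i < wt_M c) \sum_(j < wt_M c | i != j) Dd i j)%R by [].
set T := (\sum_(i < wt_M c) \sum_(j < wt_M c | i != j) Dd i j)%R.
have T0 : (0 <= T)%R by apply: sumr_ge0 => i _; apply: sumr_ge0 => j _; exact: (DdE i j).2.
have Dii i : Dd i i = 0%R.
  by rewrite /Dd esum1 // => y _; rewrite subrr normr0.
have ST : (\sum_(m < wt_M c) \sum_(j < wt_M c) Dd m j = T)%R.
  apply: eq_bigr => i _; rewrite (bigD1 i) //= Dii add0r.
  by apply: eq_bigl => j; rewrite eq_sym.
have h1 : (u * \sum_(m < wt_M c) g m <= 2 * (u * u) * T)%R.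
  rewrite -ST mulr_sumr mulr_sumr; apply: ler_sum => m _.
  rewrite (_ : (2 * (u * u) * _ = u * (2 * (u * \sum_(j < wt_M c) Dd m j)))%R); last by ring.
  by rewrite ler_pM2l //; exact: gb.
apply: (le_trans h1); rewrite dEq -mulrA ler_pM2l // -mulrA [X in (_ <= X)%R]mulrC.
have [M1|M2] := leqP (wt_M c) 1.
  have -> : T = 0%R.
    apply: big1 => i _; apply: big1 => j ij; exfalso; move/negP: ij; apply.
    rewrite -val_eqE /=; apply/eqP; move: (ltn_ord i) (ltn_ord j); lia.
  by rewrite !mulr0; apply: divr_ge0 => //; exact: T0.
rewrite mulrA [X in (_ <= X)%R]mulrC; apply: ler_wpM2r; first exact: T0.
rewrite /u -invfM -natrM ler_pV2 ?inE ?ltr0n ?muln_gt0 ?ler_nat ?leq_mul //.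
- by rewrite leq_pred.
- by rewrite unitfE pnatr_eq0; apply/and3P; split; lia.
- by rewrite unitfE pnatr_eq0; apply/and3P; split; lia.
Qed.

Lemma div_lb i : (0 < a)%R ->
  (((a / s) * g i - 1)%:E <= divergence (out_dist WB (wt_Q (w:=c) i)) (code_out WB c))%E.
Proof.
move=> a0.
have as0 : (0 < a / s)%R by rewrite divr_gt0.
rewrite /divergence; case: ifPn => _; first by rewrite leey.
rewrite EFinB; apply: leeB.
  rewrite EFinM -gE -esumZ; last 2 first.
  - exact: ltW.
  - by move=> y; rewrite /Gr; case: ifP => _; rewrite lee_fin //; exact: (dist_ge0 (Wc_chan i) y).
  apply: le_esum => y _; rewrite -EFinM lee_fin code_outE -Wc_eq /Gr.
  case: ifPn => cnd; last by rewrite mulr0 le_max lexx orbT.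
  have [_ [lr W0]] := cond_big cnd a0.
  rewrite le_max; apply/orP; left; rewrite mulrC ler_pM2l //; exact: ltW.
rewrite -Wp_sum; apply: le_esum => y _; rewrite lee_fin code_outE -Wc_eq.
have Wp0 : (0 <= Wp y)%R by case/andP: (Wp_01 y).
rewrite ge_max Wp0 andbT.
have W0 : (0 <= Wc i y)%R by exact: (dist_ge0 (Wc_chan i) y).
have [->|Wn0] := eqVneq (Wc i y) 0%R; first by rewrite mul0r oppr0.
have Wg : (0 < Wc i y)%R by rewrite lt0r Wn0.
have pu0 : (0 < pu i)%R by rewrite /pu invr_gt0 M_gt0.
have Wpg : (0 < Wp y)%R by apply: lt_le_trans (Wp_ge i y); rewrite mulr_gt0.
have rg : (0 < Wc i y / Wp y)%R by rewrite divr_gt0.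
have h := expR_ge1Dx (- ln (Wc i y / Wp y)).
rewrite expRN lnK ?posrE // invf_div in h.
have h2 : (- (Wc i y * ln (Wc i y / Wp y)) <= Wc i y * (Wp y / Wc i y - 1))%R.
  by rewrite -mulrN ler_pM2l //; lra.
apply: le_trans h2 _; rewrite mulrBr mulr1 mulrC divfK //; lra.
Qed.

Lemma spec_props : exists sp : R,
  (\esum_(m in [set: 'I_(wt_M c)]) (pu m)%:E * \esum_(y in [set: Y])
    (if (a < s * ln (Wc m y / out_dist Wc pu y))%R then Wc m y else 0%R)%:E)%E = sp%:E /\
  (0 <= sp <= 1)%R /\ ((2 <= expR (a / s))%R -> (sp <= 2 * d_E WB c)%R) /\
  ((0 < a)%R -> (((a / s) * sp - 1)%:E <= I_E WB c)%E).
Proof.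
exists (((wt_M c)%:R)^-1 * \sum_(m < wt_M c) g m)%R; split; first exact: spec_eq.
split.
  apply/andP; split.
    apply: mulr_ge0; first by rewrite invr_ge0 ler0n.
    by apply: sumr_ge0 => m _; case/andP: (g01 m).
  have uM : (((wt_M c)%:R)^-1 * (wt_M c)%:R = 1 :> R)%R by rewrite mulVf //; have := M_gt0; rewrite lt0r => /andP[].
  rewrite -[X in (_ <= X)%R]uM ler_pM2l ?invr_gt0 ?M_gt0 //.
  rewrite -[X in (_ <= X%:R)%R]card_ord -sumr_const; apply: ler_sum => m _.
  by case/andP: (g01 m).
split; first exact: spec_dE.
move=> a0; rewrite /I_E.
apply: (@le_trans _ _ (\sum_(i < wt_M c) (((wt_M c)%:R)^-1)%:E * ((a / s) * g i - 1)%:E)%E); last first.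
  apply: lee_sum => i _; apply: lee_wpmul2l; first by rewrite lee_fin invr_ge0 ler0n.
  exact: div_lb.
rewrite (eq_bigr (fun i => (((wt_M c)%:R^-1 * (a / s * g i - 1))%:E))); last by move=> i _; rewrite EFinM.
rewrite sumEFin lee_fin.
set u := (((wt_M c)%:R)^-1)%R.
have uM : (u * (wt_M c)%:R = 1)%R by rewrite mulVf //; have := M_gt0; rewrite lt0r => /andP[].
rewrite [X in (_ <= X)%R](eq_bigr (fun i => (a / s * u) * g i - u)%R); last by move=> i _; rewrite mulrBr mulr1 mulrA [(u * (a / s))%R]mulrC.
rewrite sumrB -mulr_sumr sumr_const card_ord -(mulr_natr u) uM.
by rewrite mulrA.
Qed.
End VH.
End Code.

Definition recode (R : realType) (X Y Z : countType) (c : wtcode R X Y) : wtcode R X Z :=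
  @WTCode R X Z (wt_M c) (wt_M_gt0 c) (wt_Q (w:=c)) (@wt_Q_dist _ _ _ c)
    (fun _ => set0) (fun i j _ => setI0 set0).


Lemma einf_ev (R : realType) (u : nat -> \bar R) (b : \bar R) :
  (b < limn_einf u)%E -> exists m, forall n, (m <= n)%N -> (b < u n)%E.
Proof.
rewrite limn_einf_lim (cvg_lim _ (@cvg_einfs_sup _ u)) //.
move=> /ereal_sup_gt[_ [m _ <-]] hb; exists m => n mn.
apply: (lt_le_trans hb); apply: ereal_inf_lbound; by exists n.
Qed.

Lemma cvg_EFin_ev (R : realType) (u : nat -> \bar R) (v : nat -> R) (l : R) :
  (forall n, (0 < n)%N -> u n = (v n)%:E) -> v @ \oo --> l -> u @ \oo --> l%:E.
Proof.
move=> uv vl; apply: cvg_EFin.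
  by exists 1%N => // n /= n1; rewrite uv.
apply: cvg_trans vl; apply: near_eq_cvg; exists 1%N => // n /= n1.
by rewrite uv.
Qed.

Section Asym.
Local Unset Implicit Arguments.
Variable R : realType.
Variables (X Y Z : nat -> countType).
Variables (WB : forall n, X n -> Y n -> R) (WE : forall n, X n -> Z n -> R).
Hypotheses (hWB : forall n, is_channel (WB n)) (hWE : forall n, is_channel (WE n)).
Variable c : forall n, wtcode R (X n) (Y n).

Definition Xt : nat -> countType := fun n => 'I_(wt_M (c n)).
Definition Qs : forall n, Xt n -> X n -> R := fun n => wt_Q (w:=c n).
Definition ps : forall n, Xt n -> R := fun n => pu (c:=c n).

Lemma specB_ge n a : (0 < n)%N ->
  ((1 - eps_B (WB n) (c n) - expR (a * n%:R) / (wt_M (c n))%:R)%:E <=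
   spec_prob ps (fun n => chcomp (WB n) (Qs n)) a n)%E.
Proof.
move=> n0; have := @VH R _ _ _ (hWB n) (c n) a (n%:R^-1) _.
rewrite invr_gt0 ltr0n invrK; apply => //.
Qed.

Lemma specB_le1 n a : (0 < n)%N ->
  (spec_prob ps (fun n => chcomp (WB n) (Qs n)) a n <= 1)%E.
Proof.
move=> n0; have h0 : (0 < n%:R^-1 :> R)%R by rewrite invr_gt0 ltr0n.
have [sp [E [/andP[_ h] _]]] := @spec_props R _ _ _ (hWB n) (c n) a (n%:R^-1) h0.
by rewrite /spec_prob E lee_fin.
Qed.

Lemma specE n a : (0 < n)%N -> exists sp : R,
  spec_prob ps (fun n => chcomp (WE n) (Qs n)) a n = sp%:E /\ (0 <= sp <= 1)%R /\
  ((2 <= expR (a * n%:R))%R -> (sp <= 2 * d_E (WE n) (c n))%R) /\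
  ((0 < a)%R -> (((a * n%:R) * sp - 1)%:E <= I_E (WE n) (c n))%E).
Proof.
move=> n0; have := @spec_props R _ _ _ (hWE n) (recode (Z n) (c n)) a (n%:R^-1) _.
rewrite invr_gt0 ltr0n invrK; apply => //.
Qed.

Lemma rate_le : (fun n => eps_B (WB n) (c n)) @ \oo --> (0:R) ->
  (code_rate c <= I_under 1 ps (fun n => chcomp (WB n) (Qs n)))%E.
Proof.
move=> heps; rewrite /I_under; apply: le_ereal_inf_tmp => _ [a Ha <-].
move: Ha; rewrite /= eqxx => Ha.
rewrite leNgt; apply/negP => ha.
have [b [ab bL]] : exists b : R, (a < b)%R /\ (b%:E < code_rate c)%E.
  move: ha; case: (code_rate c) => [r| |] // ha.
    exists ((a + r) / 2)%R; rewrite lte_fin in ha; rewrite lte_fin; split; lra.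
  by exists (a + 1)%R; split; [lra|rewrite ltry].
have [m hm] := einf_ev bL.
suff : spec_prob ps (fun n => chcomp (WB n) (Qs n)) a @ \oo --> 1%E.
  by move=> /cvg_limn_einf_sup [E _]; move: Ha; rewrite E ltxx.
apply: (@squeeze_cvge _ _ _ _ (fun n => (1 - eps_B (WB n) (c n) - expR ((a - b) * n%:R))%:E) _ (fun=> 1%E)).
- exists (maxn m 1) => // n /= hn.
  have n0 : (0 < n)%N by move: hn; rewrite geq_max => /andP[].
  have mn : (m <= n)%N by move: hn; rewrite geq_max => /andP[].
  rewrite specB_le1 // andbT; apply: le_trans (specB_ge _ _ n0); rewrite lee_fin.
  rewrite lerB // expRM_natr.
  have Mpos : (0 < (wt_M (c n))%:R :> R)%R by rewrite ltr0n wt_M_gt0.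
  have hb := hm n mn; rewrite lte_fin in hb.
  have hln : (b * n%:R < ln (wt_M (c n))%:R)%R.
    by rewrite -ltr_pdivlMr ?ltr0n // mulrC.
  have hM : (expR (b * n%:R) <= (wt_M (c n))%:R)%R.
    by rewrite -[X in (_ <= X)%R](lnK (x := (wt_M (c n))%:R)) ?posrE // ler_expR ltW.
  rewrite -expRM_natr mulrBl expRB ler_pM2l ?expR_gt0 //.
  by rewrite lef_pV2 ?posrE ?expR_gt0.
- apply: cvg_EFin_ev (fun n _ => erefl) _.
  rewrite -[X in _ --> X]subr0 -[X in _ --> X]subr0.
  apply: cvgB; first by apply: cvgB => //; exact: cvg_cst.
  under eq_cvg do rewrite expRM_natr.
  apply: cvg_expr; rewrite ger0_norm ?expR_ge0 // expR_lt1; lra.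
- exact: cvg_cst.
Qed.

Lemma over_le_gen :
  (forall e : R, (0 < e)%R -> (fun n => fine (spec_prob ps (fun n => chcomp (WE n) (Qs n)) e n)) @ \oo --> (0:R)) ->
  (I_over 0 ps (fun n => chcomp (WE n) (Qs n)) <= 0)%E.
Proof.
move=> hs; apply/lee_addgt0Pr => e e0; rewrite add0e.
apply: ereal_inf_lbound; exists e => //=.
rewrite eq_sym oner_eq0.
suff : spec_prob ps (fun n => chcomp (WE n) (Qs n)) e @ \oo --> 0%E.
  by move=> /cvg_limn_einf_sup [_ ->].
apply: (cvg_EFin_ev (v := fun n => fine (spec_prob ps (fun n => chcomp (WE n) (Qs n)) e n))) => [n n0|].
  by have [sp [-> _]] := specE n e n0.
exact: hs.
Qed.

Lemma over_le_d : (fun n => d_E (WE n) (c n)) @ \oo --> (0:R) ->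
  (I_over 0 ps (fun n => chcomp (WE n) (Qs n)) <= 0)%E.
Proof.
move=> hd; apply: over_le_gen => e e0.
have [N hN] : exists N : nat, (e^-1 < N%:R)%R.
  by exists (Num.Def.archi_bound e^-1); apply: archi_boundP; rewrite invr_ge0 ltW.
apply: (@squeeze_cvgr _ _ _ _ (fun=> 0%R) (fun n => 2 * d_E (WE n) (c n))%R).
- exists (maxn N 1) => // n /= hn.
  have n0 : (0 < n)%N by move: hn; rewrite geq_max => /andP[].
  have Nn : (N <= n)%N by move: hn; rewrite geq_max => /andP[].
  have [sp [E [/andP[sp0 _] [hd2 _]]]] := specE n e n0.
  rewrite E /= sp0 /=; apply: hd2.
  have h1 : (1 <= e * n%:R)%R.
    rewrite -ler_pdivrMl // mulr1; apply: ltW; apply: lt_le_trans hN _; by rewrite ler_nat.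
  apply: le_trans (expR_ge1Dx _); lra.
- exact: cvg_cst.
- by rewrite -(mulr0 2); apply: cvgMr.
Qed.

Lemma over_le_I : (fun n => (I_E (WE n) (c n) * ((n%:R)^-1)%:E)%E) @ \oo --> 0%E ->
  (I_over 0 ps (fun n => chcomp (WE n) (Qs n)) <= 0)%E.
Proof.
move=> hI; apply: over_le_gen => e e0.
move/fine_cvgP: hI => [hfin hI].
apply/cvgrPdist_le => eps eps0.
set d := (e * eps / 2)%R.
have d0 : (0 < d)%R by rewrite /d divr_gt0 // mulr_gt0.
have [N hN] : exists N : nat, (d^-1 < N%:R)%R.
  by exists (Num.Def.archi_bound d^-1); apply: archi_boundP; rewrite invr_ge0 ltW.
move/cvgrPdist_le: hI => /(_ d d0) [K _ hK].
case: hfin => [K' _ hK'].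
exists (maxn (maxn N 1) (maxn K K')) => // n /= hn.
have n0 : (0 < n)%N by move: hn; rewrite !geq_max => /andP[/andP[]]. 
have Nn : (N <= n)%N by move: hn; rewrite !geq_max => /andP[/andP[]].
have Kn : (K <= n)%N by move: hn; rewrite !geq_max => /andP[_ /andP[]].
have K'n : (K' <= n)%N by move: hn; rewrite !geq_max => /andP[_ /andP[]].
have [sp [E [/andP[sp0 _] [_ hIb]]]] := specE n e n0.
rewrite E /= sub0r normrN ger0_norm //.
have hb := hIb e0.
have fn := hK' n K'n; have dn := hK n Kn.
rewrite /= sub0r normrN in dn.
have n0' : (0 < n%:R :> R)%R by rewrite ltr0n.
have hb2 : (((e * n%:R) * sp - 1) * n%:R^-1 <= d)%R.
  rewrite -lee_fin EFinM; apply: le_trans (lee_wpmul2r _ hb) _.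
    by rewrite lee_fin invr_ge0 ler0n.
  rewrite -(fineK fn) lee_fin; apply: le_trans (ler_norm _) dn.
have hinv : (n%:R^-1 <= d)%R.
  rewrite -(invrK d) lef_pV2 ?posrE ?invr_gt0 //; apply: ltW; apply: lt_le_trans hN _; by rewrite ler_nat.
have E2 : (((e * n%:R) * sp - 1) * n%:R^-1 = e * sp - n%:R^-1)%R.
  by field; rewrite gt_eqF.
rewrite E2 in hb2.
move: hb2 hinv; rewrite /d => h1 h2.
have : (e * sp <= e * eps)%R by lra.
by rewrite ler_pM2l.
Qed.
End Asym.

Local Unset Implicit Arguments.

Theorem lemma6 (R : realType) (X Y Z : nat -> countType)
  (WB : forall n, X n -> Y n -> R) (WE : forall n, X n -> Z n -> R)
  (hWB : forall n, is_channel (WB n)) (hWE : forall n, is_channel (WE n)) :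
  (C_d WB WE <= secrecy_bound WB WE)%E /\ (C_I WB WE <= secrecy_bound WB WE)%E.
Proof.
have key : forall cc : (forall n, wtcode R (X n) (Y n)),
    (fun n => eps_B (WB n) (cc n)) @ \oo --> (0:R) ->
    (I_over 0 (ps R X Y cc) (fun n => chcomp (WE n) (Qs R X Y cc n)) <= 0)%E ->
    (code_rate cc <= secrecy_bound WB WE)%E.
  move=> cc he ho.
  set v := (I_under 1 (ps R X Y cc) (fun n => chcomp (WB n) (Qs R X Y cc n)) -
            I_over 0 (ps R X Y cc) (fun n => chcomp (WE n) (Qs R X Y cc n)))%E.
  have Sv : [set v | exists (Xt : nat -> countType)
      (Q : forall n, Xt n -> X n -> R) (p : forall n, Xt n -> R),
      (forall n, is_channel (Q n)) /\ (forall n, is_dist (p n)) /\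
      v = (I_under 1 p (fun n => chcomp (WB n) (Q n))
           - I_over 0 p (fun n => chcomp (WE n) (Q n)))%E] v.
    exists (Xt R X Y cc), (Qs R X Y cc), (ps R X Y cc); split.
      by move=> n m; exact: wt_Q_dist.
    by split => // n; exact: pu_dist.
  apply: le_trans (ereal_sup_ubound Sv).
  rewrite -[code_rate cc]sube0; apply: leeB => //.
  exact: rate_le.
split.
- apply: ge_ereal_sup => _ [cc [he [hd ->]]].
  by apply: key => //; exact: over_le_d.
- apply: ge_ereal_sup => _ [cc [he [hI ->]]].
  by apply: key => //; exact: over_le_I.
Qed.
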